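(* Let $\mathbb{F}\in\{\mathbb{R},\mathbb{C}\}$ and let $X$ be a semiprime Banach algebra over $\mathbb{F}$ with unit element $\mathbf{1}$. Let $h:X\to X$ and $\phi,\psi:X^2\to[0,\infty)$ satisfy $$\|h(xyx)-h(x)yx-xh(y)x-xyh(x)\|\le\psi(x,y),$$ $$\|h(\lambda a x+by)-\lambda A h(x)-Bh(y)\|\le\phi(x,y)$$ for all $x,y\in X$ and all $\lambda\in\Lambda$, where $a,b,A,B\in\mathbb{F}$ are fixed with $ab\neq0$ and $\Lambda\subseteq\mathbb{F}$ is nonempty. Assume there is $\xi\in\Lambda\setminus\{0\}$ such that $d:=\xi A+B=\xi a+b$ satisfies $d\neq0$, $d\neq1$, and that for all $x,y\in X$: $$\Phi(x):=\sum_{k=0}^{\infty}|d|^{-k-1}\phi(d^kx,d^kx)<\infty,\qquad \liminf_{k\to\infty}|d|^{-k}\phi(d^kx,d^ky)=0,$$ $$\liminf_{k\to\infty}|d|^{-3k}\psi(d^kx,d^ky)=0,\qquad \liminf_{k\to\infty}|d|^{-2k}\psi(d^kx,y)=0.$$ Then $h$ is a derivation. Furthermore, if $\Lambda$ has a bounded subset $\Lambda_0\in\mathcal{B}_{\mathbb{F}}$, then $h$ is a linear derivation.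
   Context: An algebra $X$ is semiprime if $aXa=\{0\}$ for some $a\in X$ implies $a=0$. A derivation is an additive map $D:X\to X$ with $D(xy)=D(x)y+xD(y)$ for all $x,y\in X$; it is linear if moreover $D(\lambda x)=\lambda D(x)$ for all scalars $\lambda$ and $x\in X$. $\mathcal{B}_{\mathbb{F}}$ denotes the family of all sets $\Lambda\subseteq\mathbb{F}$ such that every additive function $f:\mathbb{F}\to X$ which is bounded on $\Lambda$ is continuous. *)

(* Defs.v *)
From HB Require Import structures.
From mathcomp Require Import all_boot all_order all_algebra.
From mathcomp Require Import all_classical all_reals all_analysis.
From mathcomp Require Import complex.
Set Implicit Arguments. Unset Strict Implicit. Unset Printing Implicit Defensive.
Import Order.TTheory GRing.Theory Num.Theory.
Import numFieldNormedType.Exports.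
Local Open Scope classical_set_scope.
Local Open Scope ring_scope.

Definition RC (R : realType) (b : bool) : numFieldType :=
  if b then ((complex R : numClosedFieldType) : numFieldType)
  else (R : numFieldType).

(* real part / identity: turns the (real) value of a norm into an element of R *)
Definition reRC (R : realType) (b : bool) : RC R b -> R :=
  match b return RC R b -> R with
  | true => fun z => complex.Re z
  | false => fun r => r
  end.

Record banach_algebra (K : numFieldType) (X : completeNormedModType K)
    (mul : X -> X -> X) (one : X) : Prop := BanachAlgebraAxioms {
  ba_mulA : forall x y z, mul x (mul y z) = mul (mul x y) z;
  ba_mul1l : forall x, mul one x = x;
  ba_mul1r : forall x, mul x one = x;
  ba_mulDl : forall x y z, mul (x + y) z = mul x z + mul y z;
  ba_mulDr : forall x y z, mul x (y + z) = mul x y + mul x z;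
  ba_scalerAl : forall (k : K) x y, mul (k *: x) y = k *: mul x y;
  ba_scalerAr : forall (k : K) x y, mul x (k *: y) = k *: mul x y;
  ba_normM : forall x y, `|mul x y| <= `|x| * `|y|
}.

Section Defs.
Variables (R : realType) (b : bool) (X : completeNormedModType (RC R b))
  (mul : X -> X -> X).
Local Notation "x * y" := (mul x y) : ring_scope.

Definition rnorm (x : X) : R := reRC `|x|.
Definition rabs (z : RC R b) : R := reRC `|z|.

Definition semiprime : Prop :=
  forall a : X, (forall x : X, a * x * a = 0) -> a = 0.

Definition derivation (D : X -> X) : Prop :=
  (forall x y, D (x + y) = D x + D y) /\
  (forall x y, D (x * y) = D x * y + x * D y).

Definition linear_derivation (D : X -> X) : Prop :=
  derivation D /\ (forall (l : RC R b) (x : X), D (l *: x) = l *: D x).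

Definition in_BF (L : set (RC R b)) : Prop :=
  forall f : RC R b -> X,
    (forall s t, f (s + t) = f s + f t) ->
    (exists M : R, forall l, L l -> rnorm (f l) <= M) ->
    continuous f.

Definition bounded_scalars (L : set (RC R b)) : Prop :=
  exists M : R, forall l, L l -> rabs l <= M.

End Defs.

(* Main.v *)
Require Import Defs.
From HB Require Import structures.
From mathcomp Require Import all_boot all_order all_algebra.
From mathcomp Require Import all_classical all_reals all_analysis.
From mathcomp Require Import complex.
Import Order.TTheory GRing.Theory Num.Theory.
Import numFieldNormedType.Exports.
Local Open Scope classical_set_scope.
Local Open Scope ring_scope.
From Stdlib Require Ncring Ncring_tac.
From mathcomp Require Import lra.


Section Alg.
Variables (V : zmodType) (mul : V -> V -> V) (one : V).
Local Notation "x * y" := (mul x y) : ring_scope.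
Hypothesis mulA : forall x y z, x * (y * z) = x * y * z.
Hypothesis mul1l : forall x, one * x = x.
Hypothesis mul1r : forall x, x * one = x.
Hypothesis mulDl : forall x y z, (x + y) * z = x * z + y * z.
Hypothesis mulDr : forall x y z, x * (y + z) = x * y + x * z.

Definition subV (x y : V) := x - y.
#[local] Instance Vops : @Ncring.Ring_ops V 0 one +%R mul subV -%R (@eq V) := {}.
#[local] Instance Vring : Ncring.Ring (Ro := Vops).
Proof.
constructor; try exact _.
all: try (intros; solve [ apply: addrC | apply: addrA | apply: mulA | apply: mulDl | apply: mulDr | apply: mul1l | apply: mul1r | apply: add0r | apply: subrr | reflexivity]).
Qed.

Ltac ncr := Ncring_tac.non_commutative_ring.

Hypothesis sp : forall a, (forall x, a * x * a = 0) -> a = 0.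
Hypothesis tors : forall x : V, x + x = 0 -> x = 0.
Variable d : V -> V.
Hypothesis dD : forall x y, d (x + y) = d x + d y.
Hypothesis tern : forall x y, d (x * y * x) = d x * y * x + x * d y * x + x * y * d x.

Lemma eq_sub0 {u v : V} : u = v -> u - v = 0.
Proof. by move=> ->; rewrite subrr. Qed.

Lemma d0 : d 0 = 0.
Proof. by apply: (addrI (d 0)); rewrite -dD !addr0. Qed.
Lemma dN x : d (- x) = - d x.
Proof. by apply/eqP; rewrite -addr_eq0 -dD addNr d0. Qed.
Lemma dB x y : d (x - y) = d x - d y.
Proof. by rewrite dD dN. Qed.

Lemma d1 : d one = 0.
Proof.
apply: tors; have := tern one one; rewrite !mul1l => H.
have := eq_sub0 (esym H) => H2; apply: etrans _ H2; ncr.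
Qed.

Lemma jordan x y : d (x * y + y * x) = d x * y + x * d y + d y * x + y * d x.
Proof.
have H1 := tern (x + one) y; have H2 := tern x y.
have e : (x + one) * y * (x + one) = x * y * x + (x * y + y * x) + y by ncr.
rewrite e !dD d1 addr0 in H1.
have := eq_sub0 H1 => {}H1; have := eq_sub0 H2 => {}H2.
apply/eqP; rewrite -subr_eq0; apply/eqP.
have -> : d (x * y + y * x) = d (x * y) + d (y * x) by rewrite dD.
apply: etrans (_ : (d (x * y * x) + (d (x * y) + d (y * x)) + d y -
    (d x * y * (x + one) + (x + one) * d y * (x + one) + (x + one) * y * d x))
    - (d (x * y * x) - (d x * y * x + x * d y * x + x * y * d x)) = 0).
  ncr.
by rewrite H1 H2 subrr.
Qed.

Lemma lintern x y z : d (x * y * z + z * y * x) =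
  d x * y * z + x * d y * z + x * y * d z + d z * y * x + z * d y * x + z * y * d x.
Proof.
have H1 := tern (x + z) y; have H2 := tern x y; have H3 := tern z y.
have e : (x + z) * y * (x + z) = x * y * x + (x * y * z + z * y * x) + z * y * z by ncr.
rewrite e !dD in H1.
have := eq_sub0 H1 => {}H1; have := eq_sub0 H2 => {}H2; have := eq_sub0 H3 => {}H3.
apply/eqP; rewrite -subr_eq0; apply/eqP.
rewrite dD.
apply: etrans (_ : (d (x * y * x) + (d (x * y * z) + d (z * y * x)) + d (z * y * z) -
    ((d x + d z) * y * (x + z) + (x + z) * d y * (x + z) + (x + z) * y * (d x + d z)))
    - (d (x * y * x) - (d x * y * x + x * d y * x + x * y * d x))
    - (d (z * y * z) - (d z * y * z + z * d y * z + z * y * d z)) = 0).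
  ncr.
by rewrite H1 H2 H3 !subrr.
Qed.

Definition G a b := d (a * b) - d a * b - a * d b.
Definition C a b := a * b - b * a.

Lemma Gs a b : G b a = - G a b.
Proof.
have H := jordan a b; rewrite dD in H.
apply/eqP; rewrite -addr_eq0; apply/eqP.
have := eq_sub0 H => {}H; apply: etrans _ H; rewrite /G; ncr.
Qed.

Lemma GDl a c b : G (a + c) b = G a b + G c b.
Proof.
rewrite /G.
have -> : (a + c) * b = a * b + c * b by ncr.
rewrite !dD; ncr.
Qed.

Lemma GDr a b e : G a (b + e) = G a b + G a e.
Proof.
rewrite /G.
have -> : a * (b + e) = a * b + a * e by ncr.
rewrite !dD; ncr.
Qed.

Lemma key5 a b x : G a b * x * C a b + C a b * x * G a b = 0.
Proof.
have e1 := lintern (a * b) x (b * a).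
have e2 : d (a * b * x * (b * a) + b * a * x * (a * b)) =
  d (a * (b * x * b) * a) + d (b * (a * x * a) * b).
  by rewrite -dD; congr d; ncr.
rewrite e2 tern tern tern (tern a x) in e1.
have H := eq_sub0 (esym e1).
have W : G a b * x * (b * a) + (a * b) * x * G b a + G b a * x * (a * b)
   + (b * a) * x * G a b = 0.
  by apply: etrans _ H; rewrite /G; ncr.
apply/eqP; rewrite -oppr_eq0; apply/eqP; apply: etrans _ W; rewrite (Gs a b) /C; ncr.
Qed.

Lemma S1 u v : (forall x, u * x * v + v * x * u = 0) -> forall x, u * x * v = 0.
Proof.
move=> hF x; apply: sp => y; apply: tors.
have H1 := hF y; have H2 := hF (x * u * y); have H3 := hF x.
have -> : u * x * v * y * (u * x * v) + u * x * v * y * (u * x * v) =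
  u * x * (u * y * v + v * y * u) * x * v - (u * (x * u * y) * v + v * (x * u * y) * u) * x * v
  + (u * x * v + v * x * u) * y * (u * x * v) by ncr.
rewrite H1 H2 H3; ncr.
Qed.

Lemma key6 a b x : G a b * x * C a b = 0.
Proof. by apply: S1; apply: key5. Qed.

Lemma key6' a b x : C a b * x * G a b = 0.
Proof. by apply: S1 => y; rewrite addrC; apply: key5. Qed.

Lemma CDl a c b : C (a + c) b = C a b + C c b.
Proof. rewrite /C; ncr. Qed.
Lemma CDr c b e : C c (b + e) = C c b + C c e.
Proof. rewrite /C; ncr. Qed.

Lemma key7 a b c x : G a b * x * C c b = 0.
Proof.
have H := key6 (a + c) b x; rewrite GDl CDl in H.
have E : G a b * x * C c b + G c b * x * C a b = 0.
  apply: etrans (_ : (G a b + G c b) * x * (C a b + C c b) - G a b * x * C a b - G c b * x * C c b = 0).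
    ncr.
  by rewrite H !key6 !subr0.
apply: sp => y.
have -> : G a b * x * C c b * y * (G a b * x * C c b) =
  (G a b * x * C c b + G c b * x * C a b) * y * (G a b * x * C c b)
  - G c b * x * (C a b * y * G a b) * x * C c b by ncr.
rewrite E key6'; ncr.
Qed.

Lemma key7' a b c x : C c b * x * G a b = 0.
Proof.
have H := key6' (a + c) b x; rewrite GDl CDl in H.
have E : C a b * x * G c b + C c b * x * G a b = 0.
  apply: etrans (_ : (C a b + C c b) * x * (G a b + G c b) - C a b * x * G a b - C c b * x * G c b = 0).
    ncr.
  by rewrite H !key6' !subr0.
apply: sp => y.
have -> : C c b * x * G a b * y * (C c b * x * G a b) =
  (C c b * x * G a b) * y * (C a b * x * G c b + C c b * x * G a b)
  - C c b * x * (G a b * y * C a b) * x * G c b by ncr.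
rewrite E key6; ncr.
Qed.

Lemma key8 a b c e x : G a b * x * C c e = 0.
Proof.
have H := key7 a (b + e) c x; rewrite GDr !CDr in H.
have E : G a b * x * C c e + G a e * x * C c b = 0.
  apply: etrans (_ : (G a b + G a e) * x * (C c b + C c e) - G a b * x * C c b - G a e * x * C c e = 0).
    ncr.
  by rewrite H !key7 !subr0.
apply: sp => y.
have -> : G a b * x * C c e * y * (G a b * x * C c e) =
  (G a b * x * C c e + G a e * x * C c b) * y * (G a b * x * C c e)
  - G a e * x * (C c b * y * G a b) * x * C c e by ncr.
rewrite E key7'; ncr.
Qed.

Lemma central a b y : y * G a b = G a b * y.
Proof.
apply/eqP; rewrite -subr_eq0; apply/eqP.
have -> : y * G a b - G a b * y = C y (G a b) by [].
apply: sp => x.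
have -> : C y (G a b) * x * C y (G a b) =
   y * (G a b * x * C y (G a b)) - G a b * (y * x) * C y (G a b) by rewrite /C; ncr.
rewrite !key8; ncr.
Qed.

Lemma Gzero a b : G a b = 0.
Proof.
set u := G a b.
have cu : forall y, y * u = u * y by move=> y; apply: central.
have uC : forall c e, u * C c e = 0.
  by move=> c e; have := key8 a b c e one; rewrite mul1r.
set c := C a b.
have J := jordan u c.
have uc : u * c = 0 by apply: uC.
have cu0 : c * u = 0 by rewrite cu.
rewrite uc cu0 addr0 d0 (cu (d c)) in J.
have H1 : u * u * d c = 0.
  apply: tors.
  have := eq_sub0 J => {}J.
  have -> : u * u * d c + u * u * d c =
    - (u * (0 - (d u * c + u * d c + u * d c + c * d u))) - (u * d u - d u * u) * c
      - d u * (u * c) - (u * c) * d u by ncr.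
  by rewrite J uc (cu (d u)); ncr.
have H2 : u + u = d c - C (d a) b - C a (d b).
  have := Gs a b => E.
  apply: etrans (_ : G a b - G b a = _); first by rewrite E; ncr.
  by rewrite /G /c /C !dB; ncr.
have H3 : u * u * u = 0.
  apply: tors.
  have -> : u * u * u + u * u * u = u * u * (u + u) by ncr.
  rewrite H2.
  have -> : u * u * (d c - C (d a) b - C a (d b)) =
     u * u * d c - u * (u * C (d a) b) - u * (u * C a (d b)) by ncr.
  by rewrite H1 !uC; ncr.
have uu : u * u = 0.
  apply: sp => y.
  have c2 : u * u * y = y * u * u by rewrite -mulA -(cu y) mulA -(cu y).
  have -> : u * u * y * (u * u) = y * (u * u * u) * u by rewrite c2; ncr.
  by rewrite H3; ncr.
apply: sp => y.
have -> : u * y * u = y * (u * u) by rewrite -(cu y) !mulA.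
by rewrite uu; ncr.
Qed.

Lemma der x y : d (x * y) = d x * y + x * d y.
Proof.
transitivity (G x y + (d x * y + x * d y)); first by rewrite /G; ncr.
by rewrite Gzero add0r.
Qed.
End Alg.


Set Implicit Arguments. Unset Strict Implicit.


Definition emb (R : realType) (b : bool) : {rmorphism R -> RC R b} :=
  match b return {rmorphism R -> RC R b} with
  | true => real_complex R
  | false => idfun
  end.

Section Bridge.
Variables (R : realType) (b : bool).
Local Notation K := (RC R b).
Local Notation e := (emb R b).
Local Notation rabs := (@rabs R b).

Lemma reRC_emb (r : R) : reRC (e r) = r.
Proof. by case: b r. Qed.

Lemma emb_reRC {z : K} : z \is Num.real -> e (reRC z) = z.
Proof.
case: b z => /= z zr; last by [].
by rewrite RRe_real.
Qed.

Lemma emb_le (r s : R) : (e r <= e s) = (r <= s).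
Proof. by case: b; rewrite //= lecE /= eqxx. Qed.

Lemma emb_lt (r s : R) : (e r < e s) = (r < s).
Proof. by case: b; rewrite //= ltcE /= eqxx. Qed.

Lemma emb_inj : injective e.
Proof. by move=> r s /(congr1 (@reRC R b)); rewrite !reRC_emb. Qed.

Lemma emb_real (r : R) : e r \is Num.real.
Proof. by case: (lerP 0 r) => h; [apply: ger0_real | apply: ltr0_real]; rewrite -(rmorph0 e) ?emb_le ?emb_lt. Qed.

Lemma absE (k : K) : `|k| = e (rabs k).
Proof. by rewrite /rabs emb_reRC // normr_real. Qed.

Lemma rabs_ge0 k : 0 <= rabs k.
Proof. by rewrite -emb_le rmorph0 -absE. Qed.

Lemma rabsM k l : rabs (k * l) = rabs k * rabs l.
Proof. by apply: emb_inj; rewrite rmorphM -!absE normrM. Qed.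

Lemma rabsV k : rabs (k^-1) = (rabs k)^-1.
Proof. by apply: emb_inj; rewrite fmorphV -!absE normfV. Qed.

Lemma rabsX k n : rabs (k ^+ n) = (rabs k) ^+ n.
Proof. by apply: emb_inj; rewrite rmorphXn -!absE normrX. Qed.

Lemma rabs_eq0 k : (rabs k == 0) = (k == 0).
Proof. by rewrite -(inj_eq emb_inj) rmorph0 -absE normr_eq0. Qed.

Section Norm.
Variable X : completeNormedModType K.
Local Notation rnorm := (@rnorm R b X).

Lemma normE (x : X) : `|x| = e (rnorm x).
Proof. by rewrite /rnorm emb_reRC // normr_real. Qed.

Lemma rnorm_ge0 (x : X) : 0 <= rnorm x.
Proof. by rewrite -emb_le rmorph0 -normE. Qed.

Lemma rnormD (x y : X) : rnorm (x + y) <= rnorm x + rnorm y.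
Proof. by rewrite -emb_le rmorphD -!normE ler_normD. Qed.

Lemma rnormZ k (x : X) : rnorm (k *: x) = rabs k * rnorm x.
Proof. by apply: emb_inj; rewrite rmorphM -absE -!normE normrZ. Qed.

Lemma rnormN (x : X) : rnorm (- x) = rnorm x.
Proof. by apply: emb_inj; rewrite -!normE normrN. Qed.

Lemma rnormB (x y : X) : rnorm (x - y) = rnorm (y - x).
Proof. by rewrite -rnormN opprB. Qed.

Lemma rnorm_eq0 (x : X) : (rnorm x == 0) = (x == 0).
Proof. by rewrite -(inj_eq emb_inj) rmorph0 -normE normr_eq0. Qed.

Lemma rnorm0 : rnorm (0 : X) = 0.
Proof. by apply/eqP; rewrite rnorm_eq0. Qed.

Lemma rnorm_cvgP (u : nat -> X) (l : X) : u @ \oo --> l <->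
  forall eps : R, 0 < eps -> exists N, forall n, (N <= n)%N -> rnorm (l - u n) < eps.
Proof.
split.
  move/cvgrPdist_lt => H eps eps0.
  have [N _ HN] := H (e eps) ltac:(by rewrite -(rmorph0 e) emb_lt).
  by exists N => n Nn; rewrite -emb_lt -normE; apply: HN.
move=> H; apply/cvgrPdist_lt => eps eps0.
have epsr : eps \is Num.real by apply: gtr0_real.
have r0 : 0 < reRC eps by rewrite -emb_lt rmorph0 emb_reRC.
have [N HN] := H _ r0.
by exists N => // n Nn; rewrite /= normE -(emb_reRC epsr) emb_lt; apply: HN.
Qed.

Lemma cvg_summable (u : nat -> X) (t : nat -> R) :
  (forall n, rnorm (u n.+1 - u n) <= t n) -> cvgn (series t) -> cvgn u.
Proof.
move=> ut ct.
have cs : cvgn (series (telescope u)).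
  apply/cauchy_cvgP/cauchy_seriesP => eps eps0.
  have epsr : eps \is Num.real by apply: gtr0_real.
  have r0 : 0 < reRC eps by rewrite -emb_lt rmorph0 emb_reRC.
  have ctc : cauchy (series t @ \oo) by apply/cauchy_cvgP.
  have H := (@cauchy_seriesP R R t).1 ctc _ r0.

  apply: filterS H => -[m n] /= h.
  rewrite (le_lt_trans (ler_norm_sum _ _ _)) //.
  apply: (@le_lt_trans _ _ (e (\sum_(m <= k < n) t k))).
    rewrite rmorph_sum; apply: ler_sum => k _; rewrite normE emb_le; exact: ut.
  rewrite -(emb_reRC epsr) emb_lt (le_lt_trans _ h) //.
  exact: ler_norm.
have -> : u = cst (u 0%N) + series (telescope u).
  by apply/funext => n /=; rewrite [LHS]eq_sum_telescope.
apply: is_cvgD; [exact: is_cvg_cst | exact: cs].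
Qed.
End Norm.
End Bridge.

Lemma liminf0P (R : realType) (f : nat -> R) :
  limn_einf (fun k => (f k)%:E) = 0%E ->
  forall eps, 0 < eps -> forall N, exists k, (N <= k)%N /\ f k < eps.
Proof.
move=> H eps eps0 N.
have le1 : (einfs (fun k => (f k)%:E) N <= 0)%E.
  rewrite -H limn_einf_lim.
  move: (nondecreasing_einfs (fun k => (f k)%:E)).
  move/ereal_nondecreasing_cvgn/cvg_lim => -> //.
  by apply: ereal_sup_ubound; exists N.
have : (einfs (fun k => (f k)%:E) N < eps%:E)%E by apply: (le_lt_trans le1); rewrite lte_fin.
move/ereal_inf_lt => [y [k /= Nk <-]]; rewrite lte_fin => fk.
by exists k.
Qed.

Lemma summable_cvg (R : realType) (t : nat -> R) :
  (forall k, 0 <= t k) -> (\sum_(0 <= k <oo) (t k)%:E < +oo)%E -> cvgn (series t).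
Proof.
move=> t0 H.
rewrite seriesEnat; apply: nondecreasing_is_cvgn.
  by apply: nondecreasing_series => k _ _; apply: t0.
exists (fine (\sum_(0 <= k <oo) (t k)%:E)) => _ [n _ <-].
have s0 : (0 <= \sum_(0 <= k <oo) (t k)%:E)%E by apply: nneseries_ge0 => k _ _; rewrite lee_fin.
rewrite -lee_fin fineK; last by rewrite ge0_fin_numE.
rewrite /= -sumEFin.
by apply: nneseries_lim_ge => k _ _; rewrite lee_fin.
Qed.

Lemma emb_norm (R : realType) (b : bool) (s : R) : `|emb R b s| = emb R b `|s|.
Proof.
case: b => //=.
by rewrite normc_def /= expr0n /= addr0 sqrtr_sqr.
Qed.

Lemma decompK (R : realType) (b : bool) : exists j : RC R b,
  (j = 0 \/ j * j = -1) /\ forall z : RC R b, exists s t : R, z = emb R b s + j * emb R b t.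
Proof.
case: b => /=.
  exists 'i%C; split.
    by right; apply/eqP; rewrite eq_complex /= ?mul0r ?mulr0 ?mul1r ?mulr1 ?add0r ?addr0 ?sub0r ?oppr0 ?eqxx.
  by move=> z; exists (complex.Re z), (complex.Im z); rewrite [LHS]complexE.
exists 0; split; first by left.
by move=> z; exists z, 0; rewrite mul0r addr0.
Qed.


Unset Implicit Arguments. Set Strict Implicit.

Section Main.
Variables (R : realType) (b : bool) (X : completeNormedModType (RC R b))
  (mul : X -> X -> X) (one : X) (h : X -> X) (phi psi : X -> X -> R)
  (a b0 A B : RC R b) (Lam : set (RC R b)) (xi : RC R b).
Local Notation K := (RC R b).
Local Notation rnorm := (@rnorm R b X).
Local Notation rabs := (@rabs R b).
Hypothesis HBA : banach_algebra mul one.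
Hypothesis phi0 : forall x y, 0 <= phi x y.
Hypothesis psi0 : forall x y, 0 <= psi x y.
Hypothesis Hpsi : forall x y : X,
     rnorm (h (mul (mul x y) x) - mul (mul (h x) y) x - mul (mul x (h y)) x
             - mul (mul x y) (h x)) <= psi x y.
Hypothesis Hphi : forall (x y : X) (l : K), Lam l ->
     rnorm (h ((l * a) *: x + b0 *: y) - (l * A) *: h x - B *: h y) <= phi x y.
Hypothesis Lxi : Lam xi.
Hypothesis ab0 : a * b0 != 0.
Hypothesis Hsp : semiprime mul.
Hypothesis xi0 : xi != 0.
Hypothesis HdA : xi * A + B = xi * a + b0.
Local Notation d := (xi * a + b0).
Hypothesis d0 : d != 0.
Hypothesis d1 : d != 1.
Hypothesis Hsum : forall x : X, (\sum_(0 <= k <oo)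
               ((rabs d) ^- k.+1 * phi (d ^+ k *: x) (d ^+ k *: x))%:E < +oo)%E.
Hypothesis Hl1 : forall x y : X, limn_einf (fun k =>
               ((rabs d) ^- k * phi (d ^+ k *: x) (d ^+ k *: y))%:E) = 0%E.
Hypothesis Hl3 : forall x y : X, limn_einf (fun k =>
               ((rabs d) ^- (3 * k) * psi (d ^+ k *: x) (d ^+ k *: y))%:E) = 0%E.
Hypothesis Hl2 : forall x y : X, limn_einf (fun k =>
               ((rabs d) ^- (2 * k) * psi (d ^+ k *: x) y)%:E) = 0%E.

Let mulA := ba_mulA HBA.
Let mul1l := ba_mul1l HBA.
Let mul1r := ba_mul1r HBA.
Let mulDl := ba_mulDl HBA.
Let mulDr := ba_mulDr HBA.
Let mulZl := ba_scalerAl HBA.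
Let mulZr := ba_scalerAr HBA.
Let normM := ba_normM HBA.

#[local] Instance Xops : @Ncring.Ring_ops X 0 one +%R mul (@subV X) -%R (@eq X) := @Vops _ mul one.
#[local] Instance Xring : Ncring.Ring (Ro := Xops) := @Vring _ mul one mulA mul1l mul1r mulDl mulDr.
Ltac ncr := Ncring_tac.non_commutative_ring.

Lemma rnormM x y : rnorm (mul x y) <= rnorm x * rnorm y.
Proof. by rewrite -(emb_le b) rmorphM -!normE; exact: normM. Qed.

Local Notation "x ** y" := (mul x y) (at level 40, left associativity).

Definition u n z := d ^- n *: h (d ^+ n *: z).

Lemma hscale n z : h (d ^+ n *: z) = d ^+ n *: u n z.
Proof. by rewrite /u scalerA mulfV ?expf_neq0 // scale1r. Qed.

Lemma u_step z n :
  rnorm (u n.+1 z - u n z) <= rabs d ^- n.+1 * phi (d ^+ n *: z) (d ^+ n *: z).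
Proof.
set w := d ^+ n *: z.
have e1 : d ^+ n.+1 *: z = (xi * a) *: w + b0 *: w by rewrite -scalerDl /w scalerA exprS.
have e3 : d ^- n.+1 * d = d ^- n by rewrite exprS invfM mulrAC mulVf // div1r.
have e2 : u n.+1 z - u n z =
    d ^- n.+1 *: (h ((xi * a) *: w + b0 *: w) - (xi * A) *: h w - B *: h w).
  rewrite /u -e1 -/w -addrA -opprD -scalerDl HdA scalerBr scalerA e3.
  by [].
rewrite e2 rnormZ rabsV rabsX; apply: ler_wpM2l; last exact: Hphi.
by rewrite invr_ge0 exprn_ge0 // rabs_ge0.
Qed.

Lemma u_cvgn z : cvgn (fun n => u n z).
Proof.
apply: (cvg_summable (u_step z)).
apply: summable_cvg; last exact: Hsum z.
by move=> k; rewrite mulr_ge0 // invr_ge0 exprn_ge0 // rabs_ge0.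
Qed.

Definition D z := limn (fun n => u n z).

Lemma u_conv z {eps : R} : 0 < eps ->
  exists N, forall n, (N <= n)%N -> rnorm (D z - u n z) < eps.
Proof. by move: eps; apply/rnorm_cvgP; exact: u_cvgn. Qed.

Lemma approx0 (E : X) (M : R) :
  (forall eps, 0 < eps -> rnorm E <= eps * M) -> E = 0.
Proof.
move=> H; apply/eqP; rewrite -rnorm_eq0; apply/negPn/negP => hne.
have r0 : 0 < rnorm E by rewrite lt_def hne rnorm_ge0.
set r := rnorm E in hne r0 H *.
set eps := r / (`|M| + 1).
have M1 : 0 < `|M| + 1 by rewrite ltr_wpDl.
have eps0 : 0 < eps by rewrite divr_gt0.
have := H eps eps0.
have ee : eps * (`|M| + 1) = r by rewrite /eps divfK // gt_eqF.
have hM : M <= `|M| := ler_norm M.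
nra.
Qed.

Lemma rnorm4 (p q r s : X) : rnorm (p + q + r + s) <= rnorm p + rnorm q + rnorm r + rnorm s.
Proof.
apply: (le_trans (rnormD _ _)); rewrite lerD2r.
apply: (le_trans (rnormD _ _)); rewrite lerD2r.
exact: rnormD.
Qed.

Lemma rnormM3 x y z : rnorm (x ** y ** z) <= rnorm x * rnorm y * rnorm z.
Proof.
apply: (le_trans (rnormM _ _)); apply: ler_wpM2r; first exact: rnorm_ge0.
exact: rnormM.
Qed.

Lemma tern_mix x y : D (x ** y ** x) - D x ** y ** x - x ** h y ** x - x ** y ** D x = 0.
Proof.
apply: (@approx0 _ (2 + rnorm y * rnorm x + rnorm x * rnorm y)) => eps eps0.
have [N1 HN1] := u_conv x eps0.
have [N2 HN2] := u_conv (x ** y ** x) eps0.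
have [k [Nk Hk]] := liminf0P (Hl2 x y) eps0 (N1 + N2).
have c0 : d ^+ k != 0 by rewrite expf_neq0.
have e2 : d ^+ k * d ^+ k = d ^+ (2 * k) by rewrite -exprD addnn mul2n.
have eT : d ^- (2 * k) *: (h ((d ^+ k *: x) ** y ** (d ^+ k *: x))
     - h (d ^+ k *: x) ** y ** (d ^+ k *: x) - (d ^+ k *: x) ** h y ** (d ^+ k *: x)
     - (d ^+ k *: x) ** y ** h (d ^+ k *: x))
   = u (2 * k) (x ** y ** x) - u k x ** y ** x - x ** h y ** x - x ** y ** u k x.
  have e1 : (d ^+ k *: x) ** y ** (d ^+ k *: x) = d ^+ (2 * k) *: (x ** y ** x).
    by rewrite !mulZl !mulZr scalerA e2.
  rewrite e1 (hscale (2 * k)) (hscale k x).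
  move: (u (2 * k) _) (u k x) => U p.
  rewrite !mulZl !mulZr !scalerA e2.
  by rewrite !scalerBr !scalerA mulVf ?expf_neq0 // !scale1r.
have -> : D (x ** y ** x) - D x ** y ** x - x ** h y ** x - x ** y ** D x =
   d ^- (2 * k) *: (h ((d ^+ k *: x) ** y ** (d ^+ k *: x))
     - h (d ^+ k *: x) ** y ** (d ^+ k *: x) - (d ^+ k *: x) ** h y ** (d ^+ k *: x)
     - (d ^+ k *: x) ** y ** h (d ^+ k *: x))
   + (D (x ** y ** x) - u (2 * k) (x ** y ** x))
   + (u k x - D x) ** y ** x + x ** y ** (u k x - D x).
  by rewrite eT; ncr.
apply: (le_trans (rnorm4 _ _ _ _)).
have b1 : rnorm (d ^- (2 * k) *: (h ((d ^+ k *: x) ** y ** (d ^+ k *: x))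
     - h (d ^+ k *: x) ** y ** (d ^+ k *: x) - (d ^+ k *: x) ** h y ** (d ^+ k *: x)
     - (d ^+ k *: x) ** y ** h (d ^+ k *: x))) <= eps.
  rewrite rnormZ rabsV rabsX; apply/ltW/(le_lt_trans _ Hk); apply: ler_wpM2l.
    by rewrite invr_ge0 exprn_ge0 // rabs_ge0.
  exact: Hpsi.
have b2 : rnorm (D (x ** y ** x) - u (2 * k) (x ** y ** x)) <= eps.
  by apply/ltW/HN2; apply: (leq_trans (leq_addl N1 N2)); apply: (leq_trans Nk); rewrite leq_pmull.
have b0' : rnorm (u k x - D x) <= eps.
  by rewrite rnormB; apply/ltW/HN1; apply: (leq_trans (leq_addr N2 N1)).
have b3 : rnorm ((u k x - D x) ** y ** x) <= eps * rnorm y * rnorm x.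
  apply: (le_trans (rnormM3 _ _ _)); apply: ler_wpM2r; first exact: rnorm_ge0.
  apply: ler_wpM2r; first exact: rnorm_ge0.
  exact: b0'.
have b4 : rnorm (x ** y ** (u k x - D x)) <= rnorm x * rnorm y * eps.
  apply: (le_trans (rnormM3 _ _ _)); apply: ler_wpM2l; last exact: b0'.
  by rewrite mulr_ge0 // rnorm_ge0.
have := rnorm_ge0 x; have := rnorm_ge0 y.
nra.
Qed.


Lemma rnorm5 (p q r s t : X) :
  rnorm (p + q + r + s + t) <= rnorm p + rnorm q + rnorm r + rnorm s + rnorm t.
Proof.
apply: (le_trans (rnormD _ _)); rewrite lerD2r; exact: rnorm4.
Qed.

Lemma tern_D x y : D (x ** y ** x) - D x ** y ** x - x ** D y ** x - x ** y ** D x = 0.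
Proof.
apply: (@approx0 _ (2 + rnorm y * rnorm x + rnorm x * rnorm x + rnorm x * rnorm y)) => eps eps0.
have [N1 HN1] := u_conv x eps0.
have [N2 HN2] := u_conv (x ** y ** x) eps0.
have [N3 HN3] := u_conv y eps0.
have [k [Nk Hk]] := liminf0P (Hl3 x y) eps0 (N1 + N2 + N3).
have c0 : d ^+ k != 0 by rewrite expf_neq0.
have e2 : d ^+ k * d ^+ k = d ^+ (2 * k) by rewrite -exprD addnn mul2n.
have e3a : d ^+ k * d ^+ (2 * k) = d ^+ (3 * k) by rewrite -exprD; congr (_ ^+ _); rewrite !mulSn mul0n addn0.
have e3b : d ^+ (2 * k) * d ^+ k = d ^+ (3 * k) by rewrite mulrC e3a.
set T := h ((d ^+ k *: x) ** (d ^+ k *: y) ** (d ^+ k *: x))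
     - h (d ^+ k *: x) ** (d ^+ k *: y) ** (d ^+ k *: x) - (d ^+ k *: x) ** h (d ^+ k *: y) ** (d ^+ k *: x)
     - (d ^+ k *: x) ** (d ^+ k *: y) ** h (d ^+ k *: x).
have eT : d ^- (3 * k) *: T
   = u (3 * k) (x ** y ** x) - u k x ** y ** x - x ** u k y ** x - x ** y ** u k x.
  have e1 : (d ^+ k *: x) ** (d ^+ k *: y) ** (d ^+ k *: x) = d ^+ (3 * k) *: (x ** y ** x).
    by do 3?rewrite ?mulZl ?mulZr; rewrite !scalerA ?e2 ?e3a ?e3b.
  rewrite /T e1 (hscale (3 * k)) (hscale k x) (hscale k y).
  move: (u (3 * k) _) (u k x) (u k y) => U p q.
  do 3?rewrite ?mulZl ?mulZr; rewrite !scalerA ?e2 ?e3a ?e3b.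
  by rewrite !scalerBr !scalerA mulVf ?expf_neq0 // !scale1r.
have -> : D (x ** y ** x) - D x ** y ** x - x ** D y ** x - x ** y ** D x =
   d ^- (3 * k) *: T + (D (x ** y ** x) - u (3 * k) (x ** y ** x))
   + (u k x - D x) ** y ** x + x ** (u k y - D y) ** x + x ** y ** (u k x - D x).
  by rewrite eT; ncr.
apply: (le_trans (rnorm5 _ _ _ _ _)).
have b1 : rnorm (d ^- (3 * k) *: T) <= eps.
  rewrite rnormZ rabsV rabsX; apply/ltW/(le_lt_trans _ Hk); apply: ler_wpM2l.
    by rewrite invr_ge0 exprn_ge0 // rabs_ge0.
  exact: Hpsi.
have kN : (N1 + N2 + N3 <= 3 * k)%N by apply: (leq_trans Nk); rewrite leq_pmull.
have b2 : rnorm (D (x ** y ** x) - u (3 * k) (x ** y ** x)) <= eps.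
  apply/ltW/HN2; apply: leq_trans kN; apply: leq_trans (leq_addr N3 _); exact: leq_addl.
have b0' : rnorm (u k x - D x) <= eps.
  by rewrite rnormB; apply/ltW/HN1; apply: (leq_trans _ Nk); rewrite -addnA leq_addr.
have b0'' : rnorm (u k y - D y) <= eps.
  by rewrite rnormB; apply/ltW/HN3; apply: (leq_trans _ Nk); rewrite leq_addl.
have b3 : rnorm ((u k x - D x) ** y ** x) <= eps * rnorm y * rnorm x.
  apply: (le_trans (rnormM3 _ _ _)); apply: ler_wpM2r; first exact: rnorm_ge0.
  apply: ler_wpM2r; first exact: rnorm_ge0.
  exact: b0'.
have b4 : rnorm (x ** (u k y - D y) ** x) <= rnorm x * eps * rnorm x.
  apply: (le_trans (rnormM3 _ _ _)); apply: ler_wpM2r; first exact: rnorm_ge0.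
  apply: ler_wpM2l; first exact: rnorm_ge0.
  exact: b0''.
have b5 : rnorm (x ** y ** (u k x - D x)) <= rnorm x * rnorm y * eps.
  apply: (le_trans (rnormM3 _ _ _)); apply: ler_wpM2l; last exact: b0'.
  by rewrite mulr_ge0 // rnorm_ge0.
have := rnorm_ge0 x; have := rnorm_ge0 y.
nra.
Qed.

Lemma hD y : h y = D y.
Proof.
have F := tern_D one y; have E := tern_mix one y.
have H : (D (one ** y ** one) - D one ** y ** one - one ** D y ** one - one ** y ** D one)
   - (D (one ** y ** one) - D one ** y ** one - one ** h y ** one - one ** y ** D one) = 0.
  by rewrite F E subr0.
apply/eqP; rewrite -subr_eq0; apply/eqP; apply: etrans _ H; ncr.
Qed.


Lemma scZC (k1 k2 : K) (v : X) : k1 *: (k2 *: v) = k2 *: (k1 *: v).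
Proof. by rewrite !scalerA mulrC. Qed.

Lemma lin_h l x y : Lam l ->
  h ((l * a) *: x + b0 *: y) - (l * A) *: h x - B *: h y = 0.
Proof.
move=> Ll.
set w := (l * a) *: x + b0 *: y.
apply: (@approx0 _ (2 + rabs (l * A) + rabs B)) => eps eps0.
have [N1 HN1] := u_conv w eps0.
have [N2 HN2] := u_conv x eps0.
have [N3 HN3] := u_conv y eps0.
have [k [Nk Hk]] := liminf0P (Hl1 x y) eps0 (N1 + N2 + N3).
have c0 : d ^+ k != 0 by rewrite expf_neq0.
set T := h ((l * a) *: (d ^+ k *: x) + b0 *: (d ^+ k *: y))
   - (l * A) *: h (d ^+ k *: x) - B *: h (d ^+ k *: y).
have eT : d ^- k *: T = u k w - (l * A) *: u k x - B *: u k y.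
  have ew : (l * a) *: (d ^+ k *: x) + b0 *: (d ^+ k *: y) = d ^+ k *: w.
    by rewrite /w scalerDr !scalerA (mulrC (d ^+ k) (l * a)) (mulrC (d ^+ k) b0).
  rewrite /T ew !hscale.
  move: (u k w) (u k x) (u k y) => U p q.
  rewrite (scZC (l * A)) (scZC B) -!scalerBr scalerA mulVf // scale1r.
  by [].
rewrite !hD.
have -> : D w - (l * A) *: D x - B *: D y =
   d ^- k *: T + (D w - u k w) + - ((l * A) *: (D x - u k x)) + - (B *: (D y - u k y)).
  by rewrite eT !scalerBr; ncr.
apply: (le_trans (rnorm4 _ _ _ _)); rewrite !rnormN !rnormZ.
have b1 : rabs (d ^- k) * rnorm T <= eps.
  rewrite rabsV rabsX; apply/ltW/(le_lt_trans _ Hk); apply: ler_wpM2l.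
    by rewrite invr_ge0 exprn_ge0 // rabs_ge0.
  exact: Hphi.
have b2 : rnorm (D w - u k w) <= eps.
  by apply/ltW/HN1; apply: (leq_trans _ Nk); rewrite -addnA leq_addr.
have b3 : rnorm (D x - u k x) <= eps.
  by apply/ltW/HN2; apply: (leq_trans _ Nk); apply: leq_trans (leq_addr N3 _); exact: leq_addl.
have b4 : rnorm (D y - u k y) <= eps.
  by apply/ltW/HN3; apply: (leq_trans _ Nk); rewrite leq_addl.
have := rabs_ge0 (l * A); have := rabs_ge0 B.
nra.
Qed.

Lemma h0 : h 0 = 0.
Proof.
have := lin_h xi 0 0 Lxi; rewrite !scaler0 addr0 -addrA -opprD -scalerDl HdA.
move=> /eqP; rewrite subr_eq0 => /eqP H.
have : (d - 1) *: h 0 = 0 by rewrite scalerBl -H scale1r subrr.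
by move/eqP; rewrite scaler_eq0 subr_eq0 (negbTE d1) => /eqP.
Qed.

Lemma a0 : a != 0.
Proof. by apply: contraNneq ab0 => ->; rewrite mul0r. Qed.
Lemma b00 : b0 != 0.
Proof. by apply: contraNneq ab0 => ->; rewrite mulr0. Qed.

Lemma hadd x y : h (x + y) = h x + h y.
Proof.
have xa0 : xi * a != 0 by rewrite mulf_neq0 // a0.
set x' := (xi * a)^-1 *: x; set y' := b0^-1 *: y.
have ex : (xi * a) *: x' = x by rewrite /x' scalerA mulfV // scale1r.
have ey : b0 *: y' = y by rewrite /y' scalerA mulfV ?b00 // scale1r.
have H1 := lin_h xi x' y' Lxi; have H2 := lin_h xi x' 0 Lxi; have H3 := lin_h xi 0 y' Lxi.
rewrite ex ey in H1; rewrite ex scaler0 addr0 h0 scaler0 subr0 in H2.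
rewrite ey scaler0 add0r h0 scaler0 subr0 in H3.
move/eqP: H2; rewrite subr_eq0 => /eqP ->.
move/eqP: H3; rewrite subr_eq0 => /eqP ->.
by move/eqP: H1; rewrite -addrA -opprD subr_eq0 => /eqP.
Qed.

Lemma htern x y : h (x ** y ** x) = h x ** y ** x + x ** h y ** x + x ** y ** h x.
Proof.
have H := tern_D x y; rewrite -!hD in H.
by apply/eqP; rewrite -subr_eq0; apply/eqP; apply: etrans _ H; ncr.
Qed.

Lemma tors2 (x : X) : x + x = 0 -> x = 0.
Proof.
move=> H.
have n2 : (2%:R : K) != 0 by rewrite pnatr_eq0.
have : (2%:R : K) *: x = 0 by rewrite scaler_nat mulr2n.
by move/eqP; rewrite scaler_eq0 (negbTE n2) => /eqP.
Qed.

Lemma hder x y : h (x ** y) = h x ** y + x ** h y.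
Proof. exact: (@der _ mul one mulA mul1l mul1r mulDl mulDr Hsp tors2 h hadd htern). Qed.

Section Lin.
Variable Lam0 : set K.
Hypothesis L0sub : Lam0 `<=` Lam.
Hypothesis L0bd : bounded_scalars Lam0.
Hypothesis L0BF : in_BF X Lam0.

Definition g (m : K) := h (m *: one).

Lemma g0 : g 0 = 0.
Proof. by rewrite /g scale0r h0. Qed.

Lemma gD s t : g (s + t) = g s + g t.
Proof. by rewrite /g scalerDl hadd. Qed.

Lemma gN s : g (- s) = - g s.
Proof. by apply/eqP; rewrite -addr_eq0 -gD addNr g0. Qed.

Lemma gM s t : g (s * t) = t *: g s + s *: g t.
Proof.
rewrite /g.
have -> : (s * t) *: one = (s *: one) ** (t *: one) by rewrite mulZl mulZr mul1l scalerA.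
by rewrite hder mulZr mul1r mulZl mul1l.
Qed.

Lemma g1 : g 1 = 0.
Proof.
have := gM 1 1; rewrite mulr1 scale1r => H.
by apply: (@addrI _ (g 1)); rewrite addr0 -H.
Qed.

Lemma gnat n : g n%:R = 0.
Proof. by elim: n => [|n IH]; rewrite ?g0 // mulrS gD g1 IH addr0. Qed.

Lemma gint z : g z%:~R = 0.
Proof. by case: z => n; [rewrite -pmulrn gnat | rewrite NegzE mulrNz -pmulrn gN gnat oppr0]. Qed.

Lemma gdiv s t : g s = 0 -> g t = 0 -> t != 0 -> g (s / t) = 0.
Proof.
move=> gs gt t0.
have := gM (s / t) t; rewrite divfK // gs gt scaler0 addr0 => /esym/eqP.
by rewrite scaler_eq0 (negbTE t0) => /eqP.
Qed.

Lemma grat q : g (ratr q) = 0.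
Proof. by rewrite /ratr gdiv ?gint // intr_eq0 denq_neq0. Qed.

Lemma gcont : continuous g.
Proof.
apply: L0BF; first exact: gD.
have [M HM] := L0bd.
exists (M * rabs A * rnorm (h (a^-1 *: one))) => l Ll.
have := lin_h l (a^-1 *: one) 0 (L0sub _ Ll).
rewrite scaler0 addr0 h0 scaler0 subr0 scalerA -mulrA mulfV ?a0 // mulr1.
rewrite /g; move=> /eqP; rewrite subr_eq0 => /eqP ->.
rewrite rnormZ rabsM; apply: ler_wpM2r; first exact: rnorm_ge0.
by apply: ler_wpM2r; [exact: rabs_ge0 | exact: HM].
Qed.

Lemma greal (r : R) : g (emb R b r) = 0.
Proof.
apply/eqP; apply: contraT => hv.
have rn0 : 0 < rnorm (g (emb R b r)) by rewrite lt_def rnorm_eq0 hv rnorm_ge0.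
have := gcont (emb R b r); move/cvgrPdist_lt.
move=> /(_ (emb R b (rnorm (g (emb R b r))))).
rewrite -(rmorph0 (emb R b)) emb_lt => /(_ rn0) /nbhs_normP [del del0 Hdel].
have delr : del \is Num.real by apply: gtr0_real.
have dr0 : 0 < reRC del by rewrite -(emb_lt b) rmorph0 emb_reRC.
have := @rat_in_itvoo R (r - reRC del) (r + reRC del).
case; first by rewrite ltrD2l gtrN.
move=> q; rewrite in_itv /= => /andP [q1 q2].
have := Hdel (ratr q); rewrite /= -(fmorph_rat (emb R b)) -rmorphB emb_norm.
rewrite -(emb_reRC delr) emb_lt ltr_norml.
have -> : (- reRC del < r - ratr q < reRC del) = true.
  by apply/andP; split; lra.
move=> /(_ isT); rewrite fmorph_rat grat subr0 normE emb_lt.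
by rewrite ltxx.
Qed.

Lemma gzero m : g m = 0.
Proof.
have [j [hj dec]] := decompK R b.
have gj : g j = 0.
  case: hj => [->|jj]; first exact: g0.
  have := gM j j; rewrite jj gN g1 oppr0 -scalerDl => /esym/eqP.
  rewrite scaler_eq0 => /orP [|/eqP //].
  rewrite -mulr2n mulrn_eq0 /= => /eqP j0.
  by move: jj; rewrite j0 mul0r => /eqP; rewrite eq_sym oppr_eq0 oner_eq0.
have [s [t ->]] := dec m.
by rewrite gD gM gj !greal !scaler0 !addr0.
Qed.

Lemma hlin (l : K) x : h (l *: x) = l *: h x.
Proof.
have -> : l *: x = (l *: one) ** x by rewrite mulZl mul1l.
rewrite hder mulZl mul1l; have := gzero l; rewrite /g => ->.
have -> : 0 ** x = 0 by ncr.
by rewrite add0r.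
Qed.
Lemma main_lin : linear_derivation mul h.
Proof. split; [split; [exact: hadd | exact: hder] | exact: hlin]. Qed.
End Lin.

Lemma main_der : derivation mul h.
Proof. split; [exact: hadd | exact: hder]. Qed.
End Main.


Theorem corollary2p5 (R : realType) (b : bool) (X : completeNormedModType (RC R b))
  (mul : X -> X -> X) (one : X)
  (h : X -> X) (phi psi : X -> X -> R)
  (a b0 A B : RC R b) (Lam : set (RC R b)) :
  banach_algebra mul one ->
  semiprime mul ->
  (forall x y, 0 <= phi x y) -> (forall x y, 0 <= psi x y) ->
  (forall x y : X,
     rnorm (h (mul (mul x y) x) - mul (mul (h x) y) x - mul (mul x (h y)) x
             - mul (mul x y) (h x))
       <= psi x y) ->
  (forall (x y : X) (l : RC R b), Lam l ->
     rnorm (h ((l * a) *: x + b0 *: y) - (l * A) *: h x - B *: h y)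
       <= phi x y) ->
  a * b0 != 0 ->
  Lam !=set0 ->
  (exists xi : RC R b,
     [/\ Lam xi, xi != 0, xi * A + B = xi * a + b0 &
       let d := xi * a + b0 in
       [/\ d != 0, d != 1 &
        forall x y : X,
        [/\ (\sum_(0 <= k <oo)
               ((rabs d) ^- k.+1 * phi (d ^+ k *: x) (d ^+ k *: x))%:E
               < +oo)%E,
            limn_einf (fun k =>
               ((rabs d) ^- k * phi (d ^+ k *: x) (d ^+ k *: y))%:E) = 0%E,
            limn_einf (fun k =>
               ((rabs d) ^- (3 * k) * psi (d ^+ k *: x) (d ^+ k *: y))%:E)
               = 0%E &
            limn_einf (fun k =>
               ((rabs d) ^- (2 * k) * psi (d ^+ k *: x) y)%:E) = 0%E]]]) ->
  derivation mul h /\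
  ((exists Lam0 : set (RC R b),
      [/\ Lam0 `<=` Lam, bounded_scalars Lam0 & in_BF X Lam0]) ->
   linear_derivation mul h).
Proof.
move=> HBA Hsp phi0 psi0 Hpsi Hphi ab0 _ [xi [Lxi xi0 HdA]].
move=> /= [d0 d1 Hall].
have Hsum := fun x => let: And4 s _ _ _ := Hall x x in s.
have Hl1 := fun x y => let: And4 _ s _ _ := Hall x y in s.
have Hl3 := fun x y => let: And4 _ _ s _ := Hall x y in s.
have Hl2 := fun x y => let: And4 _ _ _ s := Hall x y in s.
split.
  exact: (@main_der R b X mul one h phi psi a b0 A B Lam xi HBA phi0 Hpsi Hphi
    Lxi ab0 Hsp xi0 HdA d0 d1 Hsum Hl1 Hl3 Hl2).
move=> [Lam0 [L0sub L0bd L0BF]].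
exact: (@main_lin R b X mul one h phi psi a b0 A B Lam xi HBA phi0 Hpsi Hphi
    Lxi ab0 Hsp xi0 HdA d0 d1 Hsum Hl1 Hl3 Hl2 Lam0 L0sub L0bd L0BF).
Qed.
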